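(* Fix an integer $c\ge1$, let $A=\mathbb{K}[x_ix_j: i,j\in\mathbb{N},\ i\le j\le i+c]\subseteq\mathbb{K}[x_i: i\in\mathbb{N}]$, and let $\varphi:\mathbb{K}[x_{i,j}: i\in[c+1], j\in\mathbb{N}]\to A$ be the surjective $\mathbb{K}$-algebra homomorphism with $x_{i,j}\mapsto x_jx_{i+j-1}$. Then the presentation ideal $I=\ker\varphi$ is finitely generated up to shifting by quadrics, i.e. there is a finite set $F$ of quadratic polynomials in $I$ such that $\{\operatorname{sh}_k(f): f\in F, k\in\mathbb{N}_0\}$ generates $I$.
   Context: $\mathbb{K}$ is a field; $\operatorname{sh}_k$ is the ring endomorphism of $\mathbb{K}[x_{i,j}: i\in[c+1],j\in\mathbb{N}]$ with $x_{i,j}\mapsto x_{i,j+k}$ (so that $\varphi$ commutes with the shift $x_i\mapsto x_{i+k}$). *)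

(* Defs.v *)
From HB Require Import structures.
From mathcomp Require Import all_boot all_algebra.
From mathcomp Require Import finmap.
From mathcomp.multinomials Require Import monalg.

Set Implicit Arguments.
Unset Strict Implicit.
Unset Printing Implicit Defensive.

Import GRing.Theory.
Local Open Scope ring_scope.

Definition polyR (K : fieldType) (I : choiceType) := {malg K[{cmonom I}]}.

Definition var (K : fieldType) (I : choiceType) (i : I) : polyR K I :=
  << ucm i >>.

Definition subst (K : fieldType) (I J : choiceType) (v : I -> polyR K J)
    (g : polyR K I) : polyR K J :=
  \sum_(m <- msupp g) g@_m *: \prod_(i <- finsupp m) v i ^+ m i.

(* Source variables x_{i,j}, i in [c+1], j in N, indexed 0-based:
   (i, j) : 'I_(c+1) * nat stands for x_{i+1, j+1}. Target variables x_j,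
   j in N, 0-based: j : nat stands for x_{j+1}. *)
Definition src (K : fieldType) (c : nat) := polyR K (prod 'I_c.+1 nat).
Definition tgt (K : fieldType) := polyR K nat.

(* phi : x_{i,j} |-> x_j x_{i+j-1}  (1-based), i.e. (0-based)
   (i, j) |-> x_j * x_{i+j}. Its image is A; we view it as a map into the
   full polynomial ring K[x_i], which has the same kernel. *)
Definition phi (K : fieldType) (c : nat) (g : src K c) : tgt K :=
  subst (fun p : 'I_c.+1 * nat => var K p.2 * var K (p.1 + p.2)%N) g.

Definition sh (K : fieldType) (c : nat) (k : nat) (g : src K c) : src K c :=
  subst (fun p : 'I_c.+1 * nat => var K (p.1, (p.2 + k)%N)) g.

Definition is_quadric (K : fieldType) (I : choiceType) (f : polyR K I) :=
  forall m, m \in msupp f -> mdeg m = 2%N.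

Definition in_ideal_gen (K : fieldType) (I : choiceType)
    (S : polyR K I -> Prop) (g : polyR K I) :=
  exists s : seq (polyR K I * polyR K I),
    (forall p, p \in s -> S p.2) /\ g = \sum_(p <- s) p.1 * p.2.

(* Main.v *)
Require Import Defs.
From HB Require Import structures.
From mathcomp Require Import all_boot all_algebra.
From mathcomp Require Import finmap.
From mathcomp.multinomials Require Import monalg.
From mathcomp Require Import zify.

Module Helpers.
Set Implicit Arguments.
Unset Strict Implicit.
Unset Printing Implicit Defensive.
Import GRing.Theory.
Local Open Scope ring_scope.

Section Subst.
Variables (K : fieldType) (I J : choiceType) (v : I -> polyR K J).
Local Open Scope fset_scope.

Definition Ev (m : cmonom I) : polyR K J := \prod_(i <- finsupp m) v i ^+ m i.

Lemma EvW (m : cmonom I) (d : {fset I}) : finsupp m `<=` d ->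
  Ev m = \prod_(i <- d) v i ^+ m i.
Proof.
move=> sub; rewrite /Ev (big_fset_incl _ sub) // => x _ xn.
by move: xn; rewrite -cmE_neq0 negbK => /eqP ->; rewrite expr0.
Qed.

Lemma Ev_mmorph : mmorphism Ev.
Proof.
split.
  move=> m1 m2; rewrite (EvW (d := finsupp m1 `|` finsupp m2)) ?mdomD //.
  rewrite (EvW (m := m1) (d := finsupp m1 `|` finsupp m2)) ?fsubsetUl //.
  rewrite (EvW (m := m2) (d := finsupp m1 `|` finsupp m2)) ?fsubsetUr //.
  rewrite -big_split /=; apply: eq_bigr => i _; by rewrite cmM exprD.
by rewrite /Ev mdom1 big_seq_fset0.
Qed.

HB.instance Definition _ := isMultiplicative.Build (cmonom I) (polyR K J) Ev Ev_mmorph.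

Lemma substE g : subst v g = mmap (@malgC (cmonom J) K) Ev g.
Proof.
rewrite /subst mmapE; apply: eq_bigr => m _.
by rewrite mul_malgC.
Qed.

Lemma subst_var i : subst v (var K i) = v i.
Proof.
rewrite substE /var mmapU /= /Ev mdomU big_seq_fset1 cmUU expr1.
by rewrite rmorph1 mul1r.
Qed.

Lemma substM g h : subst v (g * h) = subst v g * subst v h.
Proof. by rewrite !substE rmorphM. Qed.
Lemma substB g h : subst v (g - h) = subst v g - subst v h.
Proof. by rewrite !substE rmorphB. Qed.
Lemma substC a : subst v (a%:MP) = a%:MP.
Proof. by rewrite !substE mmapC. Qed.
Lemma subst_sum (T : Type) (r : seq T) (F : T -> polyR K I) :
  subst v (\sum_(x <- r) F x) = \sum_(x <- r) subst v (F x).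
Proof. by rewrite substE rmorph_sum; apply: eq_bigr => x _; rewrite substE. Qed.
Lemma subst_prod (T : Type) (r : seq T) (F : T -> polyR K I) :
  subst v (\prod_(x <- r) F x) = \prod_(x <- r) subst v (F x).
Proof. by rewrite substE rmorph_prod; apply: eq_bigr => x _; rewrite substE. Qed.
Lemma subst0 : subst v 0 = 0.
Proof. by rewrite substE rmorph0. Qed.
End Subst.


Section Ideal.
Variables (K : fieldType) (I : choiceType) (S : polyR K I -> Prop).
Local Notation II := (in_ideal_gen S).

Lemma I0 : II 0.
Proof. by exists [::]; split => //; rewrite big_nil. Qed.
Lemma IgD a b : II a -> II b -> II (a + b).
Proof.
move=> [s1 [H1 ->]] [s2 [H2 ->]]; exists (s1 ++ s2); split; last by rewrite big_cat.
by move=> p; rewrite mem_cat => /orP [] ?; [apply: H1 | apply: H2].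
Qed.
Lemma IgM a b : II b -> II (a * b).
Proof.
move=> [s [H ->]]; exists [seq (a * p.1, p.2) | p <- s]; split.
  by move=> p /mapP [q qs ->] /=; apply: H.
by rewrite big_map mulr_sumr; apply: eq_bigr => p _; rewrite mulrA.
Qed.
Lemma IgN a : II a -> II (- a).
Proof. by move=> h; rewrite -mulN1r; apply: IgM. Qed.
Lemma Igen h : S h -> II h.
Proof.
move=> Sh; exists [:: (1, h)]; split; first by move=> p; rewrite inE => /eqP ->.
by rewrite big_seq1 mul1r.
Qed.
Lemma Isum (T : Type) (r : seq T) (F : T -> polyR K I) :
  (forall x, II (F x)) -> II (\sum_(x <- r) F x).
Proof.
move=> H; elim: r => [|x r IH]; first by rewrite big_nil; apply: I0.
by rewrite big_cons; apply: IgD.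
Qed.

Definition eqv a b := II (a - b).
Lemma eqv_refl a : eqv a a.
Proof. by rewrite /eqv subrr; apply: I0. Qed.
Lemma eqv_trans a b d : eqv a b -> eqv b d -> eqv a d.
Proof.
rewrite /eqv => h1 h2; have := IgD h1 h2.
by rewrite addrA subrK.
Qed.
Lemma eqv_sym a b : eqv a b -> eqv b a.
Proof. by rewrite /eqv => h; have := IgN h; rewrite opprB. Qed.
Lemma eqvM a b d : eqv a b -> eqv (d * a) (d * b).
Proof. by rewrite /eqv -mulrBr; apply: IgM. Qed.
End Ideal.

Section Mon.
Variables (K : fieldType) (I : choiceType).

Definition Pr (l : seq I) : polyR K I := \prod_(i <- l) var K i.

Definition cm_of (l : seq I) : cmonom I := foldr (fun i m => mulcm (ucm i) m) (@onecm I) l.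

Lemma cm_ofE l x : cm_of l x = count_mem x l.
Proof.
elim: l => [|i l IH] /=; first by rewrite onecmE.
by rewrite mulcmE ucmE IH.
Qed.

Lemma Pr_cm l : Pr l = << cm_of l >>.
Proof.
elim: l => [|i l IH]; first by rewrite /Pr big_nil.
rewrite /Pr big_cons -/(Pr l) IH /var malgM_def fgmulUU mulr1; reflexivity.
Qed.

Lemma Pr_cat l1 l2 : Pr (l1 ++ l2) = Pr l1 * Pr l2.
Proof. by rewrite /Pr big_cat. Qed.

Lemma Pr_perm l1 l2 : perm_eq l1 l2 -> Pr l1 = Pr l2.
Proof. by move=> h; rewrite /Pr (perm_big _ h). Qed.

Lemma mdeg_cm_of l : mdeg (cm_of l) = size l.
Proof.
elim: l => [|i l IH] /=; first by apply: mdeg1.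
by rewrite (mdegM (ucm i) (cm_of l)) mdegU IH.
Qed.

Lemma cm_of_ex (m : cmonom I) : exists l, m = cm_of l.
Proof.
move: {2}(mdeg m) (leqnn (mdeg m)) => n; elim: n m => [|n IH] m hm.
  by exists [::]; apply: mdeg_eq0I; move: hm; rewrite leqn0 => /eqP.
case: (boolP (m == @onecm I)) => [/eqP -> | m1]; first by exists [::].
have [i im] : exists i, i \in finsupp m.
  case: (fset_0Vmem (finsupp m)) => [e|[i hi]]; last by exists i.
  by move: m1; rewrite -mdeg_eq0 mdegE e big_seq_fset0.
set m' := divcm m (ucm i).
have em : m = mulcm (ucm i) m'.
  apply/eqP/cmP => j; rewrite mulcmE divcmE ucmE.
  case: (eqVneq i j) => [<-|] /=; last by rewrite subn0.
  by rewrite subnKC // lt0n cmE_neq0.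
have [l hl] : exists l, m' = cm_of l.
  apply: IH; move: hm; rewrite em (mdegM (ucm i) m') mdegU //.
by exists (i :: l); rewrite /= -hl.
Qed.

Lemma monom_Pr (m : cmonom I) : exists l, << m >> = Pr l.
Proof. by have [l ->] := cm_of_ex m; exists l; rewrite Pr_cm. Qed.

Lemma cm_of_perm l1 l2 : cm_of l1 = cm_of l2 -> perm_eq l1 l2.
Proof.
move=> h; apply/allP => x _; apply/eqP.
by rewrite -!cm_ofE h.
Qed.
Lemma msupp_cm (l : seq I) m :
  m \in msupp (<<cm_of l>> : polyR K I) -> mdeg m = size l.
Proof.
rewrite (@msuppU1 (cmonom I) K (cm_of l)).
move=> /fset1P ->. apply: mdeg_cm_of.
Qed.
End Mon.


Section Edges.
Variables (K : fieldType) (c : nat).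
Local Notation E := ('I_c.+1 * nat)%type.

Fixpoint ends (s : seq E) : seq nat :=
  if s is e :: s' then e.2 :: (e.1 + e.2)%N :: ends s' else [::].

Lemma ends_cat s1 s2 : ends (s1 ++ s2) = ends s1 ++ ends s2.
Proof. by elim: s1 => //= e s1 ->. Qed.

Lemma ends_flat s : ends s = flatten [seq [:: e.2; (e.1 + e.2)%N] | e : E <- s].
Proof. by elim: s => //= e s ->. Qed.

Lemma ends_perm s1 s2 : perm_eq s1 s2 -> perm_eq (ends s1) (ends s2).
Proof. by move=> h; rewrite !ends_flat; apply/perm_flatten/perm_map. Qed.

Lemma size_ends s : size (ends s) = (2 * size s)%N.
Proof. by elim: s => //= e s ->; rewrite mulnS. Qed.

Lemma mem_ends x s : x \in ends s -> exists2 e : E, e \in s & (x = e.2 \/ x = e.1 + e.2)%N.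
Proof.
elim: s => //= e s IH; rewrite !inE => /orP [/eqP ->|/orP [/eqP ->|/IH [e' e's h]]].
- by exists e; rewrite ?inE ?eqxx //; left.
- by exists e; rewrite ?inE ?eqxx //; right.
- by exists e'; rewrite ?inE ?e's ?orbT.
Qed.

Lemma phi_Pr (s : seq E) : phi (Pr K s) = Pr K (ends s).
Proof.
rewrite /phi /Pr subst_prod; elim: s => [|e s IH]; first by rewrite !big_nil.
by rewrite big_cons IH subst_var /= !big_cons mulrA.
Qed.

Definition shE (k : nat) (e : E) : E := (e.1, (e.2 + k)%N).

Lemma sh_Pr k (s : seq E) : sh k (Pr K s) = Pr K (map (shE k) s).
Proof.
rewrite /sh /Pr subst_prod big_map; apply: eq_bigr => e _.
by rewrite subst_var.
Qed.

Lemma phiB (g h : src K c) : phi (g - h) = phi g - phi h.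
Proof. by rewrite /phi substB. Qed.
Lemma phiM (g h : src K c) : phi (g * h) = phi g * phi h.
Proof. by rewrite /phi substM. Qed.
Lemma shB k (g h : src K c) : sh k (g - h) = sh k g - sh k h.
Proof. by rewrite /sh substB. Qed.

Lemma ends_sh k s : ends (map (shE k) s) = map (addn^~ k) (ends s).
Proof. by elim: s => //= e s ->; rewrite addnA. Qed.

Definition E0 : seq E := [seq (i, j) | i <- enum 'I_c.+1, j <- iota 0 c.+1].
Definition E2 : seq (E * E) := [seq (a, b) | a <- E0, b <- E0].
Definition Q : seq ((E * E) * (E * E)) :=
  [seq q <- [seq (x, y) | x <- E2, y <- E2] |
     perm_eq (ends [:: q.1.1; q.1.2]) (ends [:: q.2.1; q.2.2])].
Definition Fq (q : (E * E) * (E * E)) : src K c :=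
  Pr K [:: q.1.1; q.1.2] - Pr K [:: q.2.1; q.2.2].
Definition F : seq (src K c) := map Fq Q.

Lemma F_quadric f : f \in F -> is_quadric f.
Proof.
move=> /mapP [q _ ->] m; rewrite /Fq !Pr_cm => /(fsubsetP (msuppB_le _ _)).
by move=> /fsetUP [] /msupp_cm ->.
Qed.

Lemma phi_F f : f \in F -> phi f = 0.
Proof.
move=> /mapP [q]; rewrite mem_filter => /andP [hp _] ->.
by rewrite /Fq phiB !phi_Pr (Pr_perm _ hp) subrr.
Qed.

Lemma phi_shF k f : f \in F -> phi (sh k f) = 0.
Proof.
move=> /mapP [q]; rewrite mem_filter => /andP [hp _] ->.
rewrite /Fq shB !sh_Pr phiB !phi_Pr.
rewrite (@Pr_perm _ _ (ends [seq shE k i | i <- [:: q.1.1; q.1.2]])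
  (ends [seq shE k i | i <- [:: q.2.1; q.2.2]])) ?subrr //.
by rewrite !ends_sh perm_map.
Qed.
End Edges.


Section Conn.
Variables (K : fieldType) (c : nat).
Local Notation E := ('I_c.+1 * nat)%type.
Definition Sg (h : src K c) := exists f k, f \in F K c /\ h = sh k f.
Local Notation eqv := (eqv Sg).

Definition un (k : nat) (e : E) : E := (e.1, (e.2 - k)%N).

Lemma ends_un k s : all (fun e : E => k <= e.2)%N s ->
  ends (map (un k) s) = map (subn^~ k) (ends s).
Proof.
elim: s => //= e s IH /andP [h1 h2]; rewrite IH //.
by congr (_ :: _ :: _); rewrite addnBA.
Qed.

Lemma move_gen (e1 e2 e3 e4 : E) k :
  all (fun e : E => k <= e.2 <= k + c)%N [:: e1; e2; e3; e4] ->
  perm_eq (ends [:: e1; e2]) (ends [:: e3; e4]) ->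
  Sg (Pr K [:: e1; e2] - Pr K [:: e3; e4]).
Proof.
move=> hall hp.
have hE0 : forall e, e \in [:: e1; e2; e3; e4] -> un k e \in E0 c.
  move=> e he; have /andP [h1 h2] := allP hall e he.
  case: e {he} h1 h2 => i j h1 h2; rewrite /= in h1 h2; rewrite /un /E0.
  apply/allpairsP; exists (i, (j - k)%N); split => //=; first by rewrite mem_enum.
  by rewrite -[0%N :: _]/(iota 0 c.+1) mem_iota /=; lia.
have hk : all (fun e : E => k <= e.2)%N [:: e1; e2; e3; e4].
  by apply/allP => e /(allP hall) /andP [].
exists (Fq K ((un k e1, un k e2), (un k e3, un k e4))), k; split.
  apply: map_f; rewrite mem_filter; apply/andP; split.
    have hk12 : all (fun e : E => k <= e.2)%N [:: e1; e2].
      by apply/allP => e he; apply: (allP hk); move: he; rewrite !inE => /orP [] ->; rewrite ?orbT.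
    have hk34 : all (fun e : E => k <= e.2)%N [:: e3; e4].
      by apply/allP => e he; apply: (allP hk); move: he; rewrite !inE => /orP [] ->; rewrite ?orbT.
    change (perm_eq (ends (map (un k) [:: e1; e2])) (ends (map (un k) [:: e3; e4]))).
    by rewrite !ends_un // perm_map.
  apply/allpairsP; exists ((un k e1, un k e2), (un k e3, un k e4)); split => //=.
    by apply/allpairsP; exists (un k e1, un k e2); split => //=; apply: hE0; rewrite !inE eqxx ?orbT.
  by apply/allpairsP; exists (un k e3, un k e4); split => //=; apply: hE0; rewrite !inE eqxx ?orbT.
have shun : forall e, e \in [:: e1; e2; e3; e4] -> shE k (un k e) = e.
  move=> e he; have := allP hk e he; case: e {he} => i j /= h.
  by rewrite /shE /un /= subnK.
rewrite /Fq shB !sh_Pr /= !shun // !inE eqxx ?orbT //.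
Qed.

Lemma ends_mem2 (e : E) s : e \in s -> (e.2 \in ends s) && ((e.1 + e.2)%N \in ends s).
Proof.
elim: s => //= e' s IH; rewrite inE => /orP [/eqP <-|/IH /andP [h1 h2]].
  by rewrite !inE !eqxx /= orbT.
by rewrite !inE h1 h2 !orbT.
Qed.

Lemma eqv_swap (x y z w : E) r :
  Sg (Pr K [:: x; y] - Pr K [:: z; w]) ->
  eqv (Pr K (x :: y :: r)) (Pr K (z :: w :: r)).
Proof.
move=> h; rewrite -[x :: y :: r]/([:: x; y] ++ r) -[z :: w :: r]/([:: z; w] ++ r).
rewrite !Pr_cat ![_ * Pr K r]mulrC; apply: eqvM; exact: Igen.
Qed.

Definition e0 (v1 v2 : nat) : E := (inord (v2 - v1), v1).

Lemma step (s : seq E) (v1 v2 : nat) (rest : seq nat) :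
  perm_eq (ends s) (v1 :: v2 :: rest) -> (v1 <= v2)%N -> all (leq v2) rest ->
  exists s1, [/\ (v2 - v1 <= c)%N, eqv (Pr K s) (Pr K (e0 v1 v2 :: s1)) &
     perm_eq (ends s1) rest].
Proof.
move=> hp h12 hrest.
have hmem : forall x : nat, x \in ends s -> (x == v1) || (v2 <= x)%N.
  move=> x; rewrite (perm_mem hp) !inE => /orP [->//|/orP [/eqP ->|hx]].
    by rewrite leqnn orbT.
  by rewrite (allP hrest x hx) orbT.
have hmin : forall x : nat, x \in ends s -> (v1 <= x)%N.
  move=> x /hmem /orP [/eqP ->//|]; move: h12; clear; lia.
have [e1 e1s he1] : exists2 e : E, e \in s & (v1 = e.2 \/ v1 = e.1 + e.2)%N.
  by apply: mem_ends; rewrite (perm_mem hp) mem_head.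
have /andP [m1 m2] := ends_mem2 e1s.
have e12 : e1.2 = v1.
  have := hmin _ m1; case: he1; clear; lia.
set a := (e1.1 + v1)%N.
set s' := rem e1 s.
have hs : perm_eq s (e1 :: s') by apply: perm_to_rem.
have hp1 : perm_eq (a :: ends s') (v2 :: rest).
  rewrite -(perm_cons v1); apply: perm_trans hp; rewrite perm_sym.
  by have := ends_perm hs; rewrite /= e12.
have e1c : (e1.1 <= c)%N by have := ltn_ord e1.1; clear; lia.
case: (eqVneq a v2) => [ha|ha].
  exists s'; split.
  - by move: ha e1c; rewrite /a; clear; lia.
  - have -> : e0 v1 v2 = e1.
      rewrite /e0 [e1 in RHS]surjective_pairing e12; congr (_, _).
      apply: val_inj; rewrite /= inordK; rewrite -ha /a; lia.
    rewrite (Pr_perm _ hs); exact: eqv_refl.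
  - by rewrite -(perm_cons v2) -{1}ha.
have v2s' : v2 \in ends s'.
  by move: (perm_mem hp1 v2); rewrite mem_head inE eq_sym (negbTE ha) /= => ->.
have av2 : (v2 < a)%N.
  move: (perm_mem hp1 a); rewrite mem_head inE (negbTE ha) /= => /esym ha'.
  by rewrite ltn_neqAle eq_sym ha (allP hrest a ha').
have hmin2 : forall x : nat, x \in ends s' -> (v2 <= x)%N.
  move=> x hx; move: (perm_mem hp1 x); rewrite inE hx orbT inE => /esym /orP [/eqP ->//|].
  by move/(allP hrest).
have [e2 e2s he2] := mem_ends v2s'.
have /andP [m3 m4] := ends_mem2 e2s.
have e22 : e2.2 = v2 by have := hmin2 _ m3; case: he2; clear; lia.
pose b := (e2.1 + v2)%N.
pose r := rem e2 s'.
have hs' : perm_eq s' (e2 :: r) by apply: perm_to_rem.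
have e2c : (e2.1 <= c)%N by have := ltn_ord e2.1; clear; lia.
pose e' : E := (inord (maxn a b - minn a b), minn a b).
have E0v : (e0 v1 v2).1 = (v2 - v1)%N :> nat.
  by rewrite /e0 /= inordK //; move: av2 e1c; rewrite /a; clear; lia.
have E'v : e'.1 = (maxn a b - minn a b)%N :> nat.
  by rewrite /e' /= inordK //; move: av2 e1c e2c h12; rewrite /a /b; clear; lia.
have hends : perm_eq (ends [:: e1; e2]) (ends [:: e0 v1 v2; e']).
  have E'2 : e'.2 = minn a b by [].
  have E02 : (e0 v1 v2).2 = v1 by [].
  rewrite /= e12 e22 ?E0v ?E'v ?E'2 ?E02 -?/a -?/b.
  have -> : (v2 - v1 + v1 = v2)%N by move: h12; clear; lia.
  rewrite perm_cons.
  case: (boolP (a <= b)%N) => hab.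
    have -> : minn a b = a by move: hab; clear; lia.
    have -> : (maxn a b - a + a = b)%N by move: hab; clear; lia.
    by rewrite -[[:: a, v2, b & [::]]]/([:: a] ++ [:: v2] ++ [:: b]) perm_catCA.
  have -> : minn a b = b by move: hab; clear; lia.
  have -> : (maxn a b - b + b = a)%N by move: hab; clear; lia.
  by rewrite -[[:: a, v2, b & [::]]]/([:: a] ++ [:: v2; b]) perm_catC.
exists (e' :: r); split.
- by move: av2 e1c; rewrite /a; clear; lia.
- apply: (@eqv_trans _ _ _ _ (Pr K (e1 :: e2 :: r))).
    have hp2 : perm_eq s (e1 :: e2 :: r) by apply: (perm_trans hs); rewrite perm_cons.
    rewrite (Pr_perm _ hp2); exact: eqv_refl.
  apply: eqv_swap; apply: (move_gen (k := v1)); last exact: hends.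
  rewrite /= e12 e22 /e0 /e' /=; move: av2 e1c e2c h12; rewrite /a /b; clear; lia.
- have h3 : perm_eq (ends s') [:: v2, b & ends r].
    by have := ends_perm hs'; rewrite /= e22.
  have h4 : perm_eq [:: a, b & ends r] rest.
    rewrite -(perm_cons v2); apply: perm_trans hp1.
    rewrite -[[:: v2, a, b & ends r]]/([:: v2] ++ [:: a] ++ (b :: ends r)) perm_catCA /=.
    by rewrite perm_cons perm_sym.
  have E'2 : e'.2 = minn a b by [].
  rewrite /= ?E'v ?E'2; apply: perm_trans h4.
  case: (boolP (a <= b)%N) => hab.
    have -> : minn a b = a by move: hab; clear; lia.
    by have -> : (maxn a b - a + a = b)%N by move: hab; clear; lia.
  have -> : minn a b = b by move: hab; clear; lia.
  have -> : (maxn a b - b + b = a)%N by move: hab; clear; lia.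
  by rewrite -[[:: b, a & ends r]]/([:: b] ++ [:: a] ++ ends r) perm_catCA.
Qed.
End Conn.


Section Main.
Variables (K : fieldType) (c : nat).
Local Notation E := ('I_c.+1 * nat)%type.
Local Notation eqv := (eqv (@Sg K c)).

Fixpoint pairs (l : seq nat) : seq E :=
  if l is a :: l' then (if l' is b :: r then e0 c a b :: pairs r else [::]) else [::].

Lemma Pr_cons (I : choiceType) (x : I) l : Pr K (x :: l) = var K x * Pr K l.
Proof. by rewrite /Pr big_cons. Qed.

Lemma conn n : forall s : seq E, size s = n ->
  eqv (Pr K s) (Pr K (pairs (sort leq (ends s)))).
Proof.
elim: n => [|n IH] s hs.
  have -> : s = [::] by apply/size0nil.
  have -> : sort leq (ends (@nil E)) = [::] by [].
  exact: eqv_refl.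
have hL : perm_eq (ends s) (sort leq (ends s)) by rewrite perm_sym perm_sort.
have sL : sorted leq (sort leq (ends s)) := sort_sorted leq_total _.
have szL : size (sort leq (ends s)) = (2 * n.+1)%N by rewrite size_sort size_ends hs.
move: hL sL szL; case: (sort leq (ends s)) => [|v1 [|v2 rest]] //.
  by rewrite /=; clear; lia.
move=> hL /= /andP [h12 hpath] szL.
have hrest := order_path_min leq_trans hpath.
have srest := path_sorted hpath.
have [s1 [hc hq hp]] := step K hL h12 hrest.
have hs1 : size s1 = n.
  have := perm_size hp; rewrite size_ends => h; rewrite -h in szL; move: szL; clear; lia.
have hsort : sort leq (ends s1) = rest.
  rewrite (perm_sortP leq_total leq_trans anti_leq _ _ hp).
  apply: sorted_sort; [exact: leq_trans | exact: srest].
have := IH s1 hs1; rewrite hsort => h.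
change (eqv (Pr K s) (Pr K (e0 c v1 v2 :: pairs rest))).
apply: (eqv_trans hq); rewrite !Pr_cons; exact: eqvM.
Qed.

Lemma cm_of_exb (mu : cmonom nat) : exists l, mu == cm_of l.
Proof. by have [l h] := cm_of_ex mu; exists l; apply/eqP. Qed.

Definition NFm (mu : cmonom nat) : src K c :=
  Pr K (pairs (sort leq (xchoose (cm_of_exb mu)))).

Lemma NFm_of (l : seq nat) : NFm (cm_of l) = Pr K (pairs (sort leq l)).
Proof.
rewrite /NFm; have /eqP h := xchooseP (cm_of_exb (cm_of l)).
have hp := cm_of_perm (esym h).
by rewrite (perm_sortP leq_total leq_trans anti_leq _ _ hp).
Qed.

Definition Psi (h : tgt K) : src K c := mmap (@malgC (cmonom E) K) NFm h.

Lemma CU (I : choiceType) (a : K) (m : cmonom I) :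
  a%:MP * << m >> = << a *g m >> :> polyR K I.
Proof.
rewrite malgM_def fgmulUU mulr1 (mul1m m); reflexivity.
Qed.

Lemma key (g : src K c) : in_ideal_gen (@Sg K c) (g - Psi (phi g)).
Proof.
have -> : Psi (phi g) = \sum_(m <- msupp g) Psi (phi << g@_m *g m >>).
  rewrite {1}(monalgE g) /phi subst_sum /Psi raddf_sum; reflexivity.
rewrite {1}(monalgE g) -sumrB.
apply: Isum => m.
have [l hl] := monom_Pr K m.
have pC : phi ((g@_m)%:MP : src K c) = (g@_m)%:MP by rewrite /phi substC.
rewrite -CU hl phiM pC phi_Pr (Pr_cm K (ends l)) CU /Psi mmapU NFm_of.
rewrite -mulrBr; apply: IgM.
exact: (conn (erefl _)).
Qed.

Lemma dirB (g : src K c) : phi g = 0 -> in_ideal_gen (@Sg K c) g.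
Proof.
move=> h; have := key g; rewrite h /Psi raddf0 subr0; apply.
Qed.

Lemma dirA (g : src K c) : in_ideal_gen (@Sg K c) g -> phi g = 0.
Proof.
move=> [s [hs ->]]; rewrite /phi subst_sum; apply: big1_seq => p /andP [_ /hs [f [k [hf ->]]]].
have h0 : phi (sh k f) = 0 := phi_shF _ hf.
rewrite substM -/(phi (sh k f)) h0; exact: mulr0.
Qed.
End Main.

End Helpers.
Import Helpers.

Local Open Scope ring_scope.

Theorem proposition6p10 (K : fieldType) (c : nat) (hc : (1 <= c)%N) :
  exists F : seq (src K c),
    (forall f, f \in F -> is_quadric f /\ phi f = 0) /\
    (forall g : src K c,
        phi g = 0 <->
        in_ideal_gen (fun h => exists f k, f \in F /\ h = sh k f) g).
Proof.
exists (Helpers.F K c); split.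
  by move=> f hf; split; [exact: F_quadric hf | exact: phi_F hf].
move=> g; split; [exact: dirB | exact: dirA].
Qed.
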